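(* Let $C$ be an $\mathbb F_q$-linear $(n,q^k,d)_{q^h}$ code over $\mathbb F_{q^h}$, and let $\mathcal A=\{\pi_1,\dots,\pi_n\}$ be an associated projective $h$-system in $\mathrm{PG}(k-1,q)$, where $\pi_j$ corresponds to coordinate position $j$. Then, for each $i\in[1,n]$, the projective $h$-systems associated to the projection of $C$ from position $i$ are (up to $\mathrm{PGL}$-equivalence) equal to the projection of $\mathcal A$ from $\pi_i$.
   Context: An $\mathbb F_q$-linear code over $\mathbb F_{q^h}$ is an $\mathbb F_q$-subspace of $\mathbb F_{q^h}^n$; here it has $q^k$ codewords, i.e. $\mathbb F_q$-dimension $k$. Associated projective $h$-system: let $G\in\mathbb F_{q^h}^{k\times n}$ have rows forming an $\mathbb F_q$-basis of $C$, fix an $\mathbb F_q$-basis $\alpha=(\alpha_1,\dots,\alpha_h)^t$ of $\mathbb F_{q^h}$, write the $j$-th column of $G$ as $G_j\alpha$ with $G_j\in\mathbb F_q^{k\times h}$, and let $\pi_j$ be the projective subspace of $\mathrm{PG}(k-1,q)$ given by the column space of $G_j$; the multiset $\{\pi_1,\dots,\pi_n\}$ is an associated projective $h$-system (these form a $\mathrm{PGL}(k,q)$-orbit). The projection of $C$ from position $i$ is $\{(x_1,\dots,x_{i-1},x_{i+1},\dots,x_n):(x_1,\dots,x_{i-1},0,x_{i+1},\dots,x_n)\in C\}$. For a subspace $U$ of $V=\mathbb F_q^k$, the projection from $U$ maps a subspace $W$ of $V$ to $(W+U)/U$ in $V/U$; this induces a map from subspaces of $\mathrm{PG}(V)$ to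 subspaces of $\mathrm{PG}(V/U)$. The projection of $\mathcal A$ from $\pi_i$ is the multiset of images of the elements of $\mathcal A\setminus\{\pi_i\}$ (as a multiset, removing the single element $\pi_i$) under projection from the subspace corresponding to $\pi_i$. *)

(* Defs.v *)
From HB Require Import structures.
From mathcomp Require Import all_boot all_order all_algebra all_field.
Set Implicit Arguments. Unset Strict Implicit. Unset Printing Implicit Defensive.
Import GRing.Theory.
Local Open Scope ring_scope.

(* F plays the role of F_q, L the role of F_{q^h} (a finite extension of F). *)
Section Codes.
Variables (F : finFieldType) (L : fieldExtType F).

Definition cw (k n : nat) (G : 'M[L]_(k, n)) (u : 'rV[F]_k) : 'rV[L]_n :=
  \row_j \sum_(i < k) u 0 i *: G i j.

Definition is_gen_mx (k n : nat) (C : 'rV[L]_n -> Prop) (G : 'M[L]_(k, n)) :=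
  (forall u, cw G u = 0 -> u = 0) /\ (forall x, C x <-> exists u, x = cw G u).

Definition proj_code (n : nat) (C : 'rV[L]_n.+1 -> Prop) (i : 'I_n.+1)
  (y : 'rV[L]_n) : Prop :=
  exists x, C x /\ x 0 i = 0 /\ forall j : 'I_n, y 0 j = x 0 (lift i j).

(* G_j in F^{k x h} with j-th column of G equal to G_j alpha. *)
Definition Gcol (h k n : nat) (alpha : h.-tuple L) (G : 'M[L]_(k, n)) (j : 'I_n)
  : 'M[F]_(k, h) := \matrix_(i < k, l < h) coord alpha l (G i j).

(* pi_j = column space of G_j, represented as the row space of G_j^T
   (a subspace of F^k = 'rV_k). *)
Definition hsys (h k n : nat) (alpha : h.-tuple L) (G : 'M[L]_(k, n)) (j : 'I_n)
  : 'M[F]_(h, k) := (Gcol alpha G j)^T.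
End Codes.

(* Projection of the system A = {A_0..A_n} from A_i, followed by a linear
   isomorphism V/U ~ F^k' (U = <A_i>): realised as a surjective linear map
   M : F^k -> F^k' with kernel exactly U; the multiset {A_j : j <> i} is
   mapped onto the multiset B via a bijection sigma of the index sets. *)
Definition proj_sys_equiv (F : fieldType) (h k k' n : nat)
  (A : 'I_n.+1 -> 'M[F]_(h, k)) (i : 'I_n.+1) (B : 'I_n -> 'M[F]_(h, k')) :=
  exists (M : 'M[F]_(k, k')) (sigma : 'I_n -> 'I_n),
    [/\ bijective sigma, \rank M = k', (kermx M == A i)%MS &
        forall j : 'I_n, (A (lift i j) *m M == B (sigma j))%MS].

(* Main.v *)
Require Import Defs.
From HB Require Import structures.
From mathcomp Require Import all_boot all_order all_algebra all_field.
Local Open Scope ring_scope.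
Set Implicit Arguments. Unset Strict Implicit.
Import GRing.Theory.

Section Aux.
Variables (F : finFieldType) (L : fieldExtType F).

Lemma cw_coord h k n (alpha : h.-tuple L) (G : 'M[L]_(k, n)) m u l :
  coord alpha l (cw G u 0 m) = (u *m (hsys alpha G m)^T) 0 l.
Proof.
rewrite /hsys trmxK !mxE linear_sum; apply: eq_bigr => r _.
by rewrite linearZ /= !mxE.
Qed.

Lemma cw_eq0 h k n (alpha : h.-tuple L) (G : 'M[L]_(k, n)) m u :
  basis_of fullv alpha ->
  (cw G u 0 m == 0) = (u *m (hsys alpha G m)^T == 0).
Proof.
move=> ba; apply/eqP/eqP => [H|H].
  apply/rowP => l; rewrite -cw_coord H linear0 mxE //.
rewrite (coord_basis ba (memvf (cw G u 0 m))).
apply: big1 => l _; by rewrite cw_coord H mxE scale0r.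
Qed.

Lemma cw_mulmx k k' n (G : 'M[L]_(k, n)) (P : 'M[F]_(k', k)) w m :
  cw G (w *m P) 0 m = \sum_s w 0 s *: cw G (row s P) 0 m.
Proof.
rewrite mxE.
under eq_bigr => r _ do rewrite mxE scaler_suml.
rewrite exchange_big /=; apply: eq_bigr => s _.
rewrite mxE scaler_sumr; apply: eq_bigr => r _.
by rewrite mxE scalerA.
Qed.

Lemma cwB k n (G : 'M[L]_(k, n)) u v : cw G (u - v) = cw G u - cw G v.
Proof.
apply/rowP => j; rewrite !mxE -sumrB; apply: eq_bigr => r _.
by rewrite !mxE scalerBl.
Qed.

Lemma hsys_change h k n (beta gamma : h.-tuple L) (G : 'M[L]_(k, n)) m :
  basis_of fullv beta ->
  hsys gamma G m = (\matrix_(l, l2) coord gamma l beta`_l2) *m hsys beta G m.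
Proof.
move=> bb; apply/matrixP => l r; rewrite !mxE.
rewrite {1}(coord_basis bb (memvf (G r m))) linear_sum.
apply: eq_bigr => l2 _; rewrite linearZ /= !mxE mulrC //.
Qed.

End Aux.

Theorem lemma3p10 (F : finFieldType) (L : fieldExtType F) (h k n : nat)
  (alpha : h.-tuple L) (C : 'rV[L]_n.+1 -> Prop) (G : 'M[L]_(k, n.+1))
  (i : 'I_n.+1) (k' : nat) (alpha' : h.-tuple L) (G' : 'M[L]_(k', n)) :
  basis_of fullv alpha -> basis_of fullv alpha' ->
  is_gen_mx C G -> is_gen_mx (proj_code C i) G' ->
  proj_sys_equiv (hsys alpha G) i (hsys alpha' G').
Proof.
move=> ba ba' [injG CG] [injG' CG'].
have: forall s : 'I_k', exists u : 'rV[F]_k,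
    cw G u 0 i = 0 /\ forall j, G' s j = cw G u 0 (lift i j).
  move=> s.
  have : proj_code C i (cw G' (delta_mx 0 s)) by apply/CG'; exists (delta_mx 0 s).
  case=> x [Cx [xi0 Hx]]; case/CG: Cx => u xE; subst x.
  exists u; split => // j; rewrite -Hx mxE (bigD1 s) //= big1 ?addr0.
    by rewrite mxE !eqxx scale1r.
  by move=> r /negPf nrs; rewrite mxE nrs andbF scale0r.
case/fin_all_exists => p Hp.
pose P : 'M[F]_(k', k) := \matrix_(s, r) p s 0 r.
have rowPs s : row s P = p s by apply/rowP => r; rewrite !mxE.
pose Ai := hsys alpha G i.
have cwP w m : cw G (w *m P) 0 m = \sum_s w 0 s *: cw G (p s) 0 m.
  by rewrite cw_mulmx; apply: eq_bigr => s _; rewrite rowPs.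
have cwPi w : cw G (w *m P) 0 i = 0.
  by rewrite cwP big1 // => s _; rewrite (proj1 (Hp s)) scaler0.
have cwPl w j : cw G (w *m P) 0 (lift i j) = cw G' w 0 j.
  rewrite cwP mxE; apply: eq_bigr => s _; by rewrite (proj2 (Hp s)).
have freeP : row_free P.
  apply: inj_row_free => w wP0; apply: injG'; apply/rowP => j.
  by rewrite -cwPl wP0 !mxE big1 // => r _; rewrite mxE scale0r.
have subPK : (P <= kermx Ai^T)%MS.
  apply/row_subP => s; rewrite sub_kermx rowPs -(cw_eq0 _ _ _ ba).
  by rewrite (proj1 (Hp s)).
have subKP : (kermx Ai^T <= P)%MS.
  apply/row_subP => r; set u := row r _.
  have u0 : cw G u 0 i = 0.
    apply/eqP; rewrite (cw_eq0 _ _ _ ba) /u -row_mul mulmx_ker.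
    by apply/eqP/rowP => l; rewrite !mxE.
  have : proj_code C i (\row_j cw G u 0 (lift i j)).
    exists (cw G u); split; first by apply/CG; exists u.
    by split => // j; rewrite mxE.
  case/CG' => w wE.
  have -> : u = w *m P.
    apply/eqP; rewrite -subr_eq0; apply/eqP; apply: injG.
    apply/eqP; rewrite cwB subr_eq0; apply/eqP/rowP => m.
    case: (unliftP i m) => [j ->|->]; last by rewrite cwPi u0.
    by rewrite cwPl -wE !mxE.
  exact: submxMl.
have eqPK : (P :=: kermx Ai^T)%MS by apply/eqmxP; rewrite subPK subKP.
exists P^T, id; split.
- by exists id.
- by rewrite mxrank_tr; exact/eqP.
- have sub : (Ai <= kermx P^T)%MS.
    have PA : P *m Ai^T = 0 by apply/eqP; rewrite -sub_kermx.
    by rewrite sub_kermx; apply/eqP; rewrite -[Ai]trmxK -trmx_mul PA trmx0.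
  apply/andP; split => //.
  rewrite -(mxrank_leqif_sup sub).2; apply/eqP.
  rewrite (mxrank_ker P^T) (mxrank_tr P) eqPK mxrank_ker subKn ?rank_leq_row //.
  by rewrite (mxrank_tr Ai).
- move=> j.
  have BE : hsys alpha' G' j = hsys alpha' G (lift i j) *m P^T.
    apply/matrixP => l s; rewrite !mxE.
    rewrite (proj2 (Hp s)) cw_coord !mxE; apply: eq_bigr => r _.
    by rewrite /hsys !mxE mulrC.
  rewrite BE; apply/andP; split.
    by rewrite (hsys_change alpha G (lift i j) ba') -mulmxA submxMl.
  by rewrite (hsys_change alpha' G (lift i j) ba) -mulmxA submxMl.
Qed.
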